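(* Let $1\le m\le n$, $x=(x_1,\dots,x_m)$, $y=(y_1,\dots,y_n)$, and let $k$ be an integer with $1\le k\le m$. Then \[\omega(x,y;t)=t^{m-n}(1-t)\sum_{l=1}^n\omega(x^{(k)},y^{(l)};t)\,\frac{y_l}{x_k-ty_l}\prod_{\substack{i=1\\ i\ne k}}^m\frac{x_i-y_l}{x_i-ty_l}\prod_{\substack{i=1\\ i\ne l}}^n\frac{y_i-ty_l}{y_i-y_l}.\]
   Context: For $x=(x_1,\dots,x_m)$ and $y=(y_1,\dots,y_n)$ (any $m\ge0$, with $\omega=1$ when $m=0$), \[\omega(x,y;t)=\sum_{I\subseteq\{1,\dots,m\}}(-1)^{|I|}t^{\binom{|I|}{2}}\prod_{i\in I,\ j\in\{1,\dots,m\}\setminus I}\frac{x_i-tx_j}{x_i-x_j}\prod_{i\in I}\prod_{j=1}^n\frac{x_i-y_j}{x_i-ty_j}.\] $x^{(k)}$ denotes $x$ with $x_k$ removed, and $y^{(l)}$ denotes $y$ with $y_l$ removed. *)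

(* Defs.v *)
From mathcomp Require Import all_boot all_order all_algebra.
Set Implicit Arguments. Unset Strict Implicit. Unset Printing Implicit Defensive.
Import Order.TTheory GRing.Theory Num.Theory.
Local Open Scope ring_scope.

Definition omega (F : fieldType) (m n : nat) (x : 'I_m -> F) (y : 'I_n -> F)
  (t : F) : F :=
  \sum_(I : {set 'I_m})
    ((-1) ^+ #|I| * t ^+ 'C(#|I|, 2)
     * (\prod_(i in I) \prod_(j in ~: I) ((x i - t * x j) / (x i - x j)))
     * (\prod_(i in I) \prod_(j : 'I_n) ((x i - y j) / (x i - t * y j)))).

Definition remove_at (F : Type) (m : nat) (k : 'I_m) (x : 'I_m -> F)
  : 'I_m.-1 -> F := fun j => x (lift k j).

(* Main.v *)
Require Import Defs.
From mathcomp Require Import all_boot all_order all_algebra.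
From mathcomp Require Import ring.
Set Implicit Arguments. Unset Strict Implicit. Unset Printing Implicit Defensive.
Import Order.TTheory GRing.Theory Num.Theory.
Local Open Scope ring_scope.
Section Lag.
Variable F : fieldType.

Lemma lagrange1 (I : finType) (A : {set I}) (r : I -> F) (ws : seq F) :
  {in A &, injective r} -> (size ws).+1 = #|A| ->
  \sum_(a in A) (\prod_(w <- ws) (r a - w)) / (\prod_(b in A :\ a) (r a - r b)) = 1.
Proof.
move=> rinj hs.
set c := fun a => (\prod_(w <- ws) (r a - w)) / (\prod_(b in A :\ a) (r a - r b)).
pose p := \prod_(w <- ws) ('X - w%:P).
pose L := \sum_(a in A) c a *: \prod_(b <- enum (A :\ a)) ('X - (r b)%:P).
have Dnz : forall a, a \in A -> \prod_(b in A :\ a) (r a - r b) != 0.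
  move=> a aA; apply/prodf_neq0 => b; rewrite !inE => /andP [ba bA].
  by rewrite subr_eq0; apply/eqP => /rinj -/(_ aA bA) eab; move: ba; rewrite eab eqxx.
have szp : size p = #|A| by rewrite /p size_prod_XsubC.
have szq : forall a, a \in A -> size (\prod_(b <- enum (A :\ a)) ('X - (r b)%:P)) = #|A|.
  move=> a aA; rewrite size_prod_XsubC -cardE (cardsD1 a A) aA.
  by rewrite add1n.
have pL : L = p.
  apply/eqP; rewrite -subr_eq0; apply/eqP.
  apply: (@roots_geq_poly_eq0 _ _ [seq r a | a in A]).
  - apply/allP => z /imageP [d dA ->]; rewrite /root hornerD hornerN.
    rewrite /L horner_sum (bigD1 d) //= [\sum_(i in A | i != d) _]big1 ?addr0; last first.
      move=> a /andP [aA ad]; rewrite hornerZ horner_prod big_enum /=.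
      rewrite (bigD1 d) /=; last by rewrite !inE eq_sym ad.
      by rewrite hornerXsubC subrr mul0r mulr0.
    rewrite hornerZ horner_prod big_enum /= /c.
    rewrite [\prod_(i in A :\ d) (_ - _%:P).[_]](eq_bigr (fun i => r d - r i)); last by move=> i _; rewrite hornerXsubC.
    rewrite divfK ?Dnz // /p horner_prod.
    rewrite [\prod_(i <- ws) (_ - _%:P).[_]](eq_bigr (fun i => r d - i)); last by move=> i _; rewrite hornerXsubC.
    by rewrite subrr.
  - by rewrite map_inj_in_uniq ?enum_uniq // => u v; rewrite !mem_enum; apply: rinj.
  - rewrite size_map -cardE; apply: (leq_trans (size_add _ _)).
    rewrite size_opp szp geq_max leqnn andbT /L.
    apply: (leq_trans (size_sum _ _ _)); apply/bigmax_leqP => a aA.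
    by apply: (leq_trans (size_scale_leq _ _)); rewrite szq.
have h : L`_(#|A|.-1) = 1 by rewrite pL -szp -lead_coefE lead_coef_prod_XsubC.
transitivity (L`_(#|A|.-1)); last exact: h.
rewrite /L coef_sum; apply: eq_bigr => a aA.
by rewrite coefZ -(szq a aA) -lead_coefE lead_coef_prod_XsubC mulr1.
Qed.

Section Main.
Variables (m n : nat) (x : 'I_m -> F) (y : 'I_n -> F) (t : F) (k : 'I_m).
Hypotheses (t0 : t != 0) (xinj : injective x) (yinj : injective y)
  (xty : forall i j, x i != t * y j).

Definition rr (a b : F) := (a - t * b) / (a - b).

Lemma xneq i j : i != j -> x i - x j != 0.
Proof. by move=> ij; rewrite subr_eq0; apply: contra ij => /eqP /xinj ->. Qed.

Lemma lemD (J : {set 'I_m}) : k \notin J ->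
  \prod_(a in J) rr (x a) (x k) - t ^+ #|J|
  + (1 - t) * \sum_(i in J) (x i / (x k - x i) * \prod_(a in J :\ i) rr (x a) (x i)) = 0.
Proof.
move=> kJ.
have L := @lagrange1 _ (k |: J) x [seq x a / t | a <- enum J].
rewrite size_map -cardE cardsU1 kJ in L.
have {}L := L (fun a b _ _ => @xinj a b) erefl.
rewrite big_setU1 //= setU1K // big_map big_enum /= in L.
have L2 : (-1) ^+ #|J| * (\prod_(a in J) rr (x a) (x k)
  + (1 - t) * \sum_(i in J) (x i / (x k - x i) * \prod_(a in J :\ i) rr (x a) (x i)))
  = (-1) ^+ #|J| * t ^+ #|J|.
  move: L; set Tk := (X in X + _ = 1); set Ts := (X in _ + X = 1) => L.
  have -> : (-1) ^+ #|J| * t ^+ #|J| = (- t) ^+ #|J| * (Tk + Ts) by rewrite L mulr1 -exprMn mulN1r.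
  rewrite mulrDr [X in _ = X]mulrDr; congr (_ + _).
    rewrite /Tk /rr prodf_div.
    have -> : \prod_(j in J) (x k - x j / t)
      = ((- t) ^+ #|J|)^-1 * \prod_(j in J) (x j - t * x k).
      rewrite -exprVn -prodrMl; apply: eq_bigr => j _; field.
      by rewrite oppr_eq0 t0.
    have -> : \prod_(j in J) (x k - x j) = (-1) ^+ #|J| * \prod_(j in J) (x j - x k).
      by rewrite -prodrN; apply: eq_bigr => j _; rewrite opprB.
    have P2 : \prod_(j in J) (x j - x k) != 0.
      by apply/prodf_neq0 => j jJ; apply: xneq; apply: contraNneq kJ => <-.
    have s0 : (-1) ^+ #|J| != 0 :> F by rewrite expf_neq0 // oppr_eq0 oner_eq0.
    have s1 : (- t) ^+ #|J| != 0 by rewrite expf_neq0 // oppr_eq0.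
    rewrite -[in LHS]invr_sign.
    move: s0 s1 P2; set a := (- t) ^+ _; set b := (-1) ^+ _ => s0 s1 P2.
    move: P2; set P1 := \prod_(j in J) (x j - t * x k); set P3 := \prod_(j in J) (x j - x k) => P2.
    by field; rewrite P2 s0 s1.
  rewrite mulrCA mulr_sumr [LHS]mulr_sumr /Ts [RHS]mulr_sumr; apply: eq_bigr => i iJ.
  rewrite big_map big_enum /= (big_setD1 i iJ) /=.
  have ki : k != i by apply: contraNneq kJ => ->.
  have -> : (k |: J) :\ i = k |: (J :\ i).
    by apply/setP => z; rewrite !inE; case: (eqVneq z k) => [->|_] /=; rewrite ?ki.
  rewrite big_setU1 /=; last by rewrite !inE negb_and kJ orbT.
  rewrite (cardsD1 i J) iJ add1n !exprS.
  have -> : \prod_(j in J :\ i) (x i - x j / t)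
    = ((- t) ^+ #|J :\ i|)^-1 * \prod_(j in J :\ i) (x j - t * x i).
    rewrite -exprVn -prodrMl; apply: eq_bigr => j _; field.
    by rewrite oppr_eq0 t0.
  have -> : \prod_(j in J :\ i) (x i - x j) = (-1) ^+ #|J :\ i| * \prod_(j in J :\ i) (x j - x i).
    by rewrite -prodrN; apply: eq_bigr => j _; rewrite opprB.
  rewrite /rr prodf_div.
  have P2 : \prod_(j in J :\ i) (x j - x i) != 0.
    by apply/prodf_neq0 => j; rewrite !inE => /andP [ji _]; apply: xneq.
  have s0 : (-1) ^+ #|J :\ i| != 0 :> F by rewrite expf_neq0 // oppr_eq0 oner_eq0.
  have s1 : (- t) ^+ #|J :\ i| != 0 by rewrite expf_neq0 // oppr_eq0.
  have e1 : x k - x i != 0 by apply: xneq.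
  have e2 : x i - x k != 0 by apply: xneq; rewrite eq_sym.
  rewrite -[in LHS]invr_sign.
  move: s0 s1 P2; set a := (- t) ^+ _; set b := (-1) ^+ _ => s0 s1 P2.
  move: P2; set P1 := \prod_(j in J :\ i) (x j - t * x i); set P3 := \prod_(j in J :\ i) (x j - x i) => P2.
  field.
  by rewrite P2 s0 s1 e1 e2 t0.
move/(congr1 (fun z => (-1) ^+ #|J| * z)): L2.
rewrite !mulrA -expr2 -exprM mulnC exprM expr2 mulN1r opprK expr1n !mul1r => h.
by rewrite addrAC h subrr.
Qed.

Lemma prodM (I : finType) (A : {set I}) (c : F) (G H : I -> F) :
  (forall i, G i = c * H i) -> \prod_(i in A) G i = c ^+ #|A| * \prod_(i in A) H i.
Proof. by move=> e; rewrite -prodrMl; apply: eq_bigr => i _; rewrite e. Qed.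

Lemma prodD1set (l : 'I_n) (g : 'I_n -> F) :
  \prod_(j : 'I_n) g j = g l * \prod_(j in [set~ l]) g j.
Proof. by rewrite (bigD1 l) //; congr (_ * _); apply: eq_bigl => j; rewrite !inE. Qed.

Definition f i := \prod_(j : 'I_n) ((x i - y j) / (x i - t * y j)).
Definition BB (S : {set 'I_m}) := \prod_(i in S) rr (x k) (x i).
Definition EE (S : {set 'I_m}) i := x i / (x k - x i) * \prod_(j in S :\ i) rr (x i) (x j).
Definition GG (S : {set 'I_m}) l := y l / (x k - t * y l)
   * \prod_(i in S) ((x i - y l) / (x i - t * y l))
   * \prod_(j in [set~ l]) ((y j - t * y l) / (y j - y l)).

Definition rz (z : 'I_n + 'I_m) := match z with inl j => t * y j | inr i => x i end.

Lemma lemC (S : {set 'I_m}) : k \notin S ->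
  t ^+ (#|S|.+1) * ((1 - t) * \sum_l GG S l)
  = t ^+ n * (1 - BB S * f k + (1 - t) * \sum_(i in S) EE S i * f i).
Proof.
move=> kS.
pose A := [set z : 'I_n + 'I_m | if z is inr i then i \in k |: S else true].
pose ws := [seq t * x i | i <- enum S] ++ [seq y j | j <- index_enum 'I_n].
have cardA : #|A| = (n + #|S|.+1)%N.
  rewrite -sum1_card big_sumType /=; congr (_ + _).
    rewrite (eq_bigl predT) ?sum1_card ?card_ord // => i; by rewrite inE.
  rewrite (eq_bigl (mem (k |: S))) ?sum1_card ?cardsU1 ?kS // => i; by rewrite inE.
have szn : size (index_enum (ordinal n)) = n by rewrite -[index_enum _]filter_predT deprecated_filter_index_enum -cardE; exact: card_ord.
have rinj : {in A &, injective rz}.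
  move=> [j|i] [j'|i'] _ _ /=.
  - by move/(mulfI t0)/yinj ->.
  - by move=> e; move: (xty i' j); rewrite e eqxx.
  - by move=> e; move: (xty i j'); rewrite e eqxx.
  - by move/xinj ->.
have hs : (size ws).+1 = #|A|.
  by rewrite size_cat !size_map -cardE szn cardA addnS addnC.
have L := @lagrange1 _ A rz ws rinj hs.
pose Tm a := \prod_(w <- ws) (rz a - w) / \prod_(b in A :\ a) (rz a - rz b).
have Nw : forall c, \prod_(w <- ws) (c - w) = \prod_(i in S) (c - t * x i) * \prod_j (c - y j).
  by move=> c; rewrite big_cat !big_map big_enum.
have Dl : forall l (g : _ -> F), \prod_(b in A :\ inl l) g b
    = \prod_(j in [set~ l]) g (inl j) * \prod_(i in k |: S) g (inr i).
  move=> l g; rewrite big_sumType; congr (_ * _); apply: eq_bigl => z; rewrite !inE //=.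
  by rewrite andbT; apply/negbLR; rewrite negbK; apply/eqP/eqP => [[]|->].
have Di : forall i (g : _ -> F), \prod_(b in A :\ inr i) g b
    = \prod_j g (inl j) * \prod_(i' in (k |: S) :\ i) g (inr i').
  move=> i g; rewrite big_sumType; congr (_ * _); apply: eq_bigl => z; rewrite !inE //=.
have hl : forall l, t ^+ #|[set~ l]| * Tm (inl l) = t ^+ #|S| * (1 - t) * GG S l.
  move=> l; rewrite /Tm Nw Dl /= big_setU1 //= (prodD1set l).
  rewrite (@prodM _ S (- t) (fun i => t * y l - t * x i) (fun i => x i - y l)); last by move=> i; ring.
  rewrite (@prodM _ S (- 1) (fun i => t * y l - x i) (fun i => x i - t * y l)); last by move=> i; ring.
  rewrite (@prodM _ [set~ l] (- 1) (fun j => t * y l - y j) (fun j => y j - t * y l)); last by move=> j; ring.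
  rewrite (@prodM _ [set~ l] (- t) (fun j => t * y l - t * y j) (fun j => y j - y l)); last by move=> j; ring.
  rewrite /GG !prodf_div (exprNn t #|S|) (exprNn t #|[set~ l]|).
  have N2 : \prod_(i in S) (x i - t * y l) != 0.
    by apply/prodf_neq0 => i _; rewrite subr_eq0.
  have N4 : \prod_(j in [set~ l]) (y j - y l) != 0.
    apply/prodf_neq0 => j; rewrite !inE => jl; rewrite subr_eq0.
    by apply: contra jl => /eqP /yinj ->.
  have e1 : x k - t * y l != 0 by rewrite subr_eq0.
  have e2 : t * y l - x k != 0 by rewrite subr_eq0 eq_sym.
  have s1 : (-1) ^+ #|S| != 0 :> F by rewrite expf_neq0 // oppr_eq0 oner_eq0.
  have s2 : (-1) ^+ #|[set~ l]| != 0 :> F by rewrite expf_neq0 // oppr_eq0 oner_eq0.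
  have s3 : t ^+ #|S| != 0 by rewrite expf_neq0.
  have s4 : t ^+ #|[set~ l]| != 0 by rewrite expf_neq0.
  move: s1 s2 s3 s4 N2 N4.
  set a1 := (-1) ^+ #|S|; set a2 := (-1) ^+ #|[set~ l]|; set a3 := t ^+ #|S|; set a4 := t ^+ #|[set~ l]|.
  set N1 := \prod_(i in S) (x i - y l); set N2 := \prod_(i in S) (x i - t * y l).
  set N3 := \prod_(j in [set~ l]) (y j - t * y l); set N4 := \prod_(j in [set~ l]) (y j - y l).
  move=> s1 s2 s3 s4 n2 n4.
  by field; rewrite n4 n2 e1 s1 e2 s4 s2.
have Q2nz : forall i, \prod_j (x i - t * y j) != 0.
  by move=> i; apply/prodf_neq0 => j _; rewrite subr_eq0.
have hk : Tm (inr k) = BB S * f k.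
  rewrite /Tm Nw Di /= setU1K // /BB /f /rr !prodf_div.
  have P2 : \prod_(i in S) (x k - x i) != 0.
    by apply/prodf_neq0 => i iS; apply: xneq; apply: contraNneq kS => ->.
  move: P2 (Q2nz k).
  set P1 := \prod_(i in S) (x k - t * x i); set P2 := \prod_(i in S) (x k - x i).
  set Q1 := \prod_j (x k - y j); set Q2 := \prod_j (x k - t * y j) => p2 q2.
  by field; rewrite p2 q2.
have hi : forall i, i \in S -> Tm (inr i) = - (1 - t) * (EE S i * f i).
  move=> i iS; rewrite /Tm Nw Di /= (big_setD1 i iS) /=.
  have ki : k != i by apply: contraNneq kS => ->.
  have -> : (k |: S) :\ i = k |: (S :\ i).
    by apply/setP => z; rewrite !inE; case: (eqVneq z k) => [->|_] /=; rewrite ?ki.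
  rewrite big_setU1 /=; last by rewrite !inE negb_and kS orbT.
  rewrite /EE /f /rr !prodf_div.
  have P2 : \prod_(j in S :\ i) (x i - x j) != 0.
    by apply/prodf_neq0 => j; rewrite !inE => /andP [ji _]; apply: xneq; rewrite eq_sym.
  have e1 : x k - x i != 0 by apply: xneq.
  have e2 : x i - x k != 0 by apply: xneq; rewrite eq_sym.
  move: P2 (Q2nz i).
  set P1 := \prod_(j in S :\ i) (x i - t * x j); set P2 := \prod_(j in S :\ i) (x i - x j).
  set Q1 := \prod_j (x i - y j); set Q2 := \prod_j (x i - t * y j) => p2 q2.
  by field; rewrite p2 q2 e1 e2.
have L' : \sum_l Tm (inl l) + (Tm (inr k) + \sum_(i in S) Tm (inr i)) = 1.
  rewrite -L big_sumType /=; congr (_ + _).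
    by apply: eq_bigl => l; rewrite inE.
  rewrite [RHS](eq_bigl (mem (k |: S))); last by move=> i; rewrite inE.
  by rewrite big_setU1.
have e : \sum_l Tm (inl l) = 1 - BB S * f k + (1 - t) * \sum_(i in S) EE S i * f i.
  move: L'; rewrite hk (eq_bigr _ hi) -mulr_sumr => L'.
  by rewrite -[X in X - _ + _]L'; ring.
rewrite -e [RHS]mulr_sumr mulrA [LHS]mulr_sumr; apply: eq_bigr => l _.
have -> : t ^+ n = t * t ^+ #|[set~ l]|.
  by rewrite cardsC1 card_ord -exprS prednK // (leq_ltn_trans (leq0n l) (ltn_ord l)).
transitivity (t * (t ^+ #|[set~ l]| * Tm (inl l))); last by rewrite mulrA.
by rewrite hl exprS; ring.
Qed.

Lemma subK (J : {set 'I_m}) : (J \subset [set~ k]) = (k \notin J).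
Proof.
apply/subsetP/idP => [h|kJ j jJ].
  by apply/negP => /h; rewrite !inE eqxx.
by rewrite !inE; apply: contraNneq kJ => <-.
Qed.

Lemma split_k (G : {set 'I_m} -> F) :
  \sum_(I : {set 'I_m}) G I = \sum_(J : {set 'I_m} | J \subset [set~ k]) (G J + G (k |: J)).
Proof.
rewrite big_split /= [LHS](bigID (fun I : {set 'I_m} => k \in I)) /= addrC; congr (_ + _).
  by apply: eq_bigl => J; rewrite subK.
rewrite (reindex_onto (fun J : {set 'I_m} => k |: J) (fun I : {set 'I_m} => I :\ k)) /=; last first.
  by move=> I kI; rewrite setD1K.
apply: eq_bigl => J; rewrite setU11 /= subK.
apply/eqP/idP => [<-|kJ]; first by rewrite !inE eqxx.
by rewrite setU1K.
Qed.

Lemma prod_lift n0 (j0 : 'I_n0) (g : 'I_n0 -> F) :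
  \prod_(j < n0.-1) g (lift j0 j) = \prod_(j in [set~ j0]) g j.
Proof.
rewrite [RHS](reindex_omap (lift j0) (unlift j0)) /=.
  by apply: eq_bigl => j; rewrite !inE liftK eqxx andbT eq_sym neq_lift.
by move=> i; rewrite !inE; case: unliftP => [j ->|->] //=; rewrite eqxx.
Qed.

Definition cc (U J : {set 'I_m}) := (-1) ^+ #|J| * t ^+ 'C(#|J|, 2)
  * \prod_(i in J) \prod_(j in U :\: J) rr (x i) (x j).
Definition fl (l : 'I_n) i := \prod_(j in [set~ l]) ((x i - y j) / (x i - t * y j)).

Lemma omegaT : omega x y t = \sum_(I : {set 'I_m}) cc setT I * \prod_(i in I) f i.
Proof.
apply: eq_bigr => I _; rewrite /cc setTD; congr (_ * _).
Qed.

Lemma omegaK l : omega (remove_at k x) (remove_at l y) t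
  = \sum_(J : {set 'I_m} | J \subset [set~ k]) cc [set~ k] J * \prod_(i in J) fl l i.
Proof.
have liftI := @lift_inj m k.
rewrite [RHS](reindex (fun J : {set 'I_m.-1} => lift k @: J)); last first.
  exists (fun J : {set 'I_m} => lift k @^-1: J).
    by move=> I' _; apply/setP => j; rewrite inE mem_imset.
  move=> J; rewrite inE subK => kJ; apply/setP => z; apply/imsetP/idP => [[j]|zJ].
    by rewrite inE => jJ ->.
  case: (unliftP k z) zJ => [j ->|->] zJ; last by rewrite zJ in kJ.
  by exists j; rewrite ?inE.
rewrite /omega; apply: eq_big => I'.
  symmetry; apply/subsetP => z /imsetP [j _ ->]; by rewrite !inE eq_sym neq_lift.
move=> _; rewrite /cc card_imset //.
have eK : [set~ k] :\: lift k @: I' = lift k @: ~: I'.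
  apply/setP => z; case: (unliftP k z) => [j ->|->].
    by rewrite !inE mem_imset // mem_imset // !inE eq_sym neq_lift andbT.
  rewrite !inE eqxx andbF; apply/esym/negbTE/negP => /imsetP [j _] /eqP; by rewrite (negbTE (neq_lift k j)).
rewrite eK big_imset /=; last by move=> ? ? _ _; apply: liftI.
rewrite big_imset /=; last by move=> ? ? _ _; apply: liftI.
congr (_ * _ * _).
  apply: eq_bigr => i _; rewrite big_imset //=; by move=> ? ? _ _; apply: liftI.
apply: eq_bigr => i _; rewrite /fl -prod_lift //.
Qed.


Lemma pair_exch (G : {set 'I_m} -> 'I_m -> F) :
  \sum_(J : {set 'I_m} | J \subset [set~ k]) \sum_(i in [set~ k] :\: J) G J i
  = \sum_(J : {set 'I_m} | J \subset [set~ k]) \sum_(i in J) G (J :\ i) i.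
Proof.
rewrite (exchange_big_dep (mem [set~ k])) /=; last by move=> J i _; rewrite in_setD => /andP [].
rewrite [RHS](exchange_big_dep (mem [set~ k])) /=; last by move=> J i JK iJ; apply: (subsetP JK).
apply: eq_bigr => i iK.
rewrite [RHS](reindex_onto (fun J : {set 'I_m} => i |: J) (fun J : {set 'I_m} => J :\ i)) /=; last first.
  by move=> J /andP [_ iJ]; rewrite setD1K.
apply: eq_big => J.
  rewrite setU11 andbT subUset sub1set iK /= in_setD iK andbT; congr (_ && _).
  case: (boolP (i \in J)) => iJ /=.
    apply/esym/negbTE/eqP => e; move: iJ; rewrite -e !inE eqxx.
    by [].
  by rewrite setU1K // eqxx.
by move=> /andP [_]; rewrite in_setD => /andP [iJ _]; rewrite setU1K.
Qed.


Definition DD (J : {set 'I_m}) i := x i / (x k - x i) * \prod_(a in J :\ i) rr (x a) (x i).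

Lemma LHSe (J : {set 'I_m}) : J \subset [set~ k] ->
  cc setT J * \prod_(i in J) f i + cc setT (k |: J) * \prod_(i in k |: J) f i
  = cc [set~ k] J * \prod_(i in J) f i * t ^+ #|J| * (1 - BB ([set~ k] :\: J) * f k)
    - (1 - t) * \sum_(i in J) (cc [set~ k] J * \prod_(i in J) f i * DD J i).
Proof.
move=> JK; have kJ : k \notin J by rewrite -subK.
have hD : \prod_(a in J) rr (x a) (x k) = t ^+ #|J| - (1 - t) * \sum_(i in J) DD J i.
  have h := lemD kJ; apply/eqP; rewrite -subr_eq0; apply/eqP; rewrite -[RHS]h /DD; ring.
have e1 : setT :\: J = k |: ([set~ k] :\: J).
  by apply/setP => z; rewrite !inE; case: (eqVneq z k) => [->|] //=; rewrite kJ.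
have e2 : setT :\: (k |: J) = [set~ k] :\: J.
  by apply/setP => z; rewrite !inE negb_or andbT andbC.
have kS : k \notin [set~ k] :\: J by rewrite !inE eqxx andbF.
rewrite /cc e1 e2 cardsU1 kJ add1n (big_setU1 _ kJ) /= (big_setU1 _ kJ) /=.
rewrite (eq_bigr (fun i => rr (x i) (x k) * \prod_(j in [set~ k] :\: J) rr (x i) (x j))); last first.
  by move=> i _; rewrite big_setU1.
rewrite big_split /= hD -mulr_sumr binS bin1 exprS exprD /BB.
set a1 := (-1) ^+ #|J|; set a2 := t ^+ 'C(#|J|, 2); set a3 := t ^+ #|J|.
ring.
Qed.


Lemma RHSl (l : 'I_n) (J : {set 'I_m}) : J \subset [set~ k] ->
  cc [set~ k] J * \prod_(i in J) fl l i * (y l / (x k - t * y l))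
  * (\prod_(i : 'I_m | i != k) ((x i - y l) / (x i - t * y l)))
  * (\prod_(i : 'I_n | i != l) ((y i - t * y l) / (y i - y l)))
  = cc [set~ k] J * \prod_(i in J) f i * GG ([set~ k] :\: J) l.
Proof.
move=> JK.
have -> : \prod_(i : 'I_m | i != k) ((x i - y l) / (x i - t * y l))
  = \prod_(i in [set~ k]) ((x i - y l) / (x i - t * y l)).
  by apply: eq_bigl => i; rewrite !inE.
rewrite [\prod_(i in [set~ k]) _](big_setID J) /= (setIidPr JK).
have -> : \prod_(i : 'I_n | i != l) ((y i - t * y l) / (y i - y l))
  = \prod_(i in [set~ l]) ((y i - t * y l) / (y i - y l)).
  by apply: eq_bigl => i; rewrite !inE.
have -> : \prod_(i in J) f i = \prod_(i in J) ((x i - y l) / (x i - t * y l)) * \prod_(i in J) fl l i.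
  by rewrite -big_split; apply: eq_bigr => i _; rewrite /f (prodD1set l).
rewrite /GG; ring.
Qed.

Lemma Rper (J : {set 'I_m}) : (1 <= m)%N -> J \subset [set~ k] ->
  t ^ (m%:Z - n%:Z) * (1 - t) * (cc [set~ k] J * \prod_(i in J) f i * \sum_l GG ([set~ k] :\: J) l)
  = cc [set~ k] J * \prod_(i in J) f i * t ^+ #|J| * (1 - BB ([set~ k] :\: J) * f k)
    + (1 - t) * \sum_(i in [set~ k] :\: J)
        (cc [set~ k] J * \prod_(i in J) f i * t ^+ #|J| * (EE ([set~ k] :\: J) i * f i)).
Proof.
move=> m1 JK.
have kS : k \notin [set~ k] :\: J by rewrite !inE eqxx andbF.
have hC := lemC kS.
have cm : (#|J| + #|[set~ k] :\: J|.+1)%N = m.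
  by rewrite addnS -{1}(setIidPr JK) cardsID cardsC1 card_ord prednK.
have tm : t ^+ m = t ^+ #|J| * t ^+ (#|[set~ k] :\: J|.+1) by rewrite -exprD cm.
have texp : t ^ (m%:Z - n%:Z) = t ^+ m / t ^+ n by rewrite expfzDr // -exprnN.
rewrite -mulr_sumr texp tm.
have tn : t ^+ n != 0 by rewrite expf_neq0.
transitivity (cc [set~ k] J * \prod_(i in J) f i * t ^+ #|J|
   * (t ^+ (#|[set~ k] :\: J|.+1) * ((1 - t) * \sum_l GG ([set~ k] :\: J) l)) / t ^+ n).
  move: tn; set a := t ^+ n; set b := t ^+ #|J|; set c := t ^+ (_.+1) => tn.
  by field.
rewrite hC.
move: tn; set a := t ^+ n; set b := t ^+ #|J| => tn.
by field.
Qed.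

Lemma Vper (J : {set 'I_m}) i : J \subset [set~ k] -> i \in J ->
  cc [set~ k] (J :\ i) * \prod_(j in J :\ i) f j * t ^+ #|J :\ i|
    * (EE ([set~ k] :\: (J :\ i)) i * f i)
  = - (cc [set~ k] J * \prod_(j in J) f j * DD J i).
Proof.
move=> JK iJ.
have iK : i \in [set~ k] by apply: (subsetP JK).
have iS : i \notin [set~ k] :\: J by rewrite in_setD iJ.
have e1 : [set~ k] :\: (J :\ i) = i |: ([set~ k] :\: J).
  apply/setP => z; rewrite !inE; case: (eqVneq z i) => [->|] //=.
  by move: iK; rewrite !inE.
rewrite /EE e1 setU1K //.
rewrite /cc e1 (cardsD1 i J) iJ add1n.
rewrite (eq_bigr (fun a => rr (x a) (x i) * \prod_(b in [set~ k] :\: J) rr (x a) (x b))); last first.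
  by move=> a _; rewrite big_setU1.
rewrite big_split /= (big_setD1 i iJ) /= [\prod_(j in J) f j](big_setD1 i iJ) /= /DD.
rewrite binS bin1 exprS exprD.
set a1 := (-1) ^+ #|J :\ i|; set a2 := t ^+ 'C(#|J :\ i|, 2); set a3 := t ^+ #|J :\ i|.
ring.
Qed.


Lemma main_sec : (1 <= m)%N -> (m <= n)%N ->
  omega x y t =
  t ^ (m%:Z - n%:Z) * (1 - t) *
  \sum_(l : 'I_n)
    (omega (remove_at k x) (remove_at l y) t
     * (y l / (x k - t * y l))
     * (\prod_(i : 'I_m | i != k) ((x i - y l) / (x i - t * y l)))
     * (\prod_(i : 'I_n | i != l) ((y i - t * y l) / (y i - y l)))).
Proof.
move=> m1 mn.
have RS : \sum_(l : 'I_n)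
    (omega (remove_at k x) (remove_at l y) t
     * (y l / (x k - t * y l))
     * (\prod_(i : 'I_m | i != k) ((x i - y l) / (x i - t * y l)))
     * (\prod_(i : 'I_n | i != l) ((y i - t * y l) / (y i - y l))))
  = \sum_(J : {set 'I_m} | J \subset [set~ k])
       cc [set~ k] J * \prod_(i in J) f i * \sum_l GG ([set~ k] :\: J) l.
  rewrite (eq_bigr (fun l => \sum_(J : {set 'I_m} | J \subset [set~ k])
      cc [set~ k] J * \prod_(i in J) f i * GG ([set~ k] :\: J) l)); last first.
    move=> l _; rewrite omegaK !mulr_suml; apply: eq_bigr => J JK; exact: RHSl.
  by rewrite exchange_big /=; apply: eq_bigr => J _; rewrite mulr_sumr.
rewrite RS mulr_sumr (eq_bigr _ (fun J JK => Rper m1 JK)) big_split /= -mulr_sumr.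
rewrite pair_exch.
rewrite [X in _ = _ + _ * X](eq_bigr (fun J : {set 'I_m} => - \sum_(i in J) (cc [set~ k] J * \prod_(j in J) f j * DD J i))); last first.
  by move=> J JK; rewrite -sumrN; apply: eq_bigr => i iJ; exact: Vper.
rewrite omegaT split_k (eq_bigr _ (fun J JK => LHSe JK)).
by rewrite sumrB -[X in _ - X = _]mulr_sumr [in RHS]sumrN mulrN.
Qed.

End Main.
End Lag.

Unset Implicit Arguments.
Set Strict Implicit.

Theorem proposition3p4 (F : fieldType) (m n : nat) (x : 'I_m -> F)
  (y : 'I_n -> F) (t : F) (k : 'I_m) :
  (1 <= m)%N -> (m <= n)%N ->
  t != 0 ->
  injective x -> injective y ->
  (forall (i : 'I_m) (j : 'I_n), x i != t * y j) ->
  omega x y t =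
  t ^ (m%:Z - n%:Z) * (1 - t) *
  \sum_(l : 'I_n)
    (omega (remove_at k x) (remove_at l y) t
     * (y l / (x k - t * y l))
     * (\prod_(i : 'I_m | i != k) ((x i - y l) / (x i - t * y l)))
     * (\prod_(i : 'I_n | i != l) ((y i - t * y l) / (y i - y l)))).
Proof.
move=> m1 mn t0 xinj yinj xty.
by apply: main_sec.
Qed.
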